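(* Let $G_1$ and $G_2$ be OPERA DAGs with $G_1\sim G_2$. Then the layerings $\phi_{LPL}^{G_1}$ and $\phi_{LPL}^{G_2}$ are consistent: $\phi_{LPL}^{G_1}(v)=\phi_{LPL}^{G_2}(v)$ for every vertex $v$ contained in both $G_1$ and $G_2$. Equivalently, the H-OPERA DAGs obtained from $G_1$ and $G_2$ by the longest-path layering are consistent.
   Context: An OPERA DAG is a finite directed acyclic graph $G=(V,E)$ of events, where an edge $(u,v)$ means that $u$ references its parent $v$. $G[v]$ denotes the subgraph induced on $v$ and all vertices reachable from $v$ (its ancestors), and $G_1\sim G_2$ means $G_1[v]=G_2[v]$ for every $v$ in both DAGs. The longest-path layering $\phi_{LPL}^{G}:V\to\mathbb{Z}$ is defined recursively. $\phi_{LPL}^G(v)=1$ if $v$ has no parents in $G$, and otherwise $\phi_{LPL}^G(v)=1+\max\{\phi_{LPL}^G(u): (v,u)\in E\}$. The H-OPERA DAG is the hierarchical graph $(V,E,\phi_{LPL}^G)$. *)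

(* Defs.v *)
From mathcomp Require Import all_boot.
Set Implicit Arguments. Unset Strict Implicit. Unset Printing Implicit Defensive.

(* An OPERA DAG over a finite universe of events T: a finite vertex set V and
   an edge relation E, where [E u v] means that u references its parent v. *)
Record opera_dag (T : finType) := OperaDag {
  dV : {set T};
  dE : rel T;
  dE_in : forall u v, dE u v -> (u \in dV) && (v \in dV);
  dE_acyclic : forall u v, dE u v -> ~~ connect dE v u
}.

Section Defs.
Variable T : finType.

(* Vertex set of G[v]: v together with all vertices reachable from v. *)
Definition anc (G : opera_dag T) (v : T) : {set T} :=
  [set u | connect (dE G) v u].

Definition induced_eq (G1 G2 : opera_dag T) (v : T) : Prop :=
  anc G1 v = anc G2 v /\
  (forall x y, x \in anc G1 v -> y \in anc G1 v -> dE G1 x y = dE G2 x y).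

Definition dag_sim (G1 G2 : opera_dag T) : Prop :=
  forall v, v \in dV G1 -> v \in dV G2 -> induced_eq G1 G2 v.

Fixpoint lpl_fuel (E : rel T) (n : nat) (v : T) : nat :=
  match n with
  | 0 => 1
  | n'.+1 => 1 + \max_(u | E v u) lpl_fuel E n' u
  end.

(* Longest-path layering: since every directed path of a DAG on T has fewer
   than #|T| edges, depth #|T| suffices for the recursion to bottom out. *)
Definition lpl (G : opera_dag T) (v : T) : nat := lpl_fuel (dE G) #|T| v.

End Defs.

(* Main.v *)
Require Import Defs.
From mathcomp Require Import all_boot.

Lemma edge_eq (T : finType) (G1 G2 : opera_dag T) v :
  induced_eq G1 G2 v -> forall u w, u \in anc G1 v -> dE G1 u w = dE G2 u w.
Proof.
move=> [HA HE] u w Hu.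
have Hu2 : u \in anc G2 v by rewrite -HA.
case E1: (dE G1 u w).
  have Hw : w \in anc G1 v by rewrite /anc !inE in Hu *; exact: connect_trans Hu (connect1 E1).
  by rewrite -HE ?E1.
case E2: (dE G2 u w) => //.
have Hw : w \in anc G1 v by rewrite HA /anc inE; rewrite /anc inE in Hu2;
  exact: connect_trans Hu2 (connect1 E2).
by rewrite -E1 HE.
Qed.

Lemma fuel_eq (T : finType) (G1 G2 : opera_dag T) v :
  induced_eq G1 G2 v -> forall n u, u \in anc G1 v ->
  lpl_fuel (dE G1) n u = lpl_fuel (dE G2) n u.
Proof.
move=> H; elim=> [//|n IH] u Hu /=.
congr (_ + _).
rewrite (eq_bigl (fun w => dE G2 u w)); last by move=> w; exact: @edge_eq _ _ _ _ H u w Hu.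
apply: eq_bigr => w Ew; apply: IH.
have Ew1 : dE G1 u w by rewrite (@edge_eq _ _ _ _ H u w Hu).
rewrite /anc !inE in Hu *; exact: connect_trans Hu (connect1 Ew1).
Qed.

Theorem mainTheorem5 (T : finType) (G1 G2 : opera_dag T) :
  dag_sim G1 G2 ->
  forall v, v \in dV G1 -> v \in dV G2 -> lpl G1 v = lpl G2 v.
Proof.
move=> Hs v H1 H2; apply: (@fuel_eq _ _ _ _ (Hs v H1 H2)).
by rewrite /anc inE connect0.
Qed.
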